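(* Let $q$ be a prime power, $k\ge 3$, $n\ge \frac{k(k+1)}{2}-2$, and let $\alpha_1,\dots,\alpha_n\in\mathbb F_q$ be pairwise distinct. Then there exist $\mathbf i=(i_1,\dots,i_{k-1}),\mathbf j=(j_1,\dots,j_{k-1})\in S_{k-1}(n)$ such that $j_\ell<i_\ell\le \frac{k(k+1)}2-2$ for all $\ell=1,\dots,k-1$ and the $(k-1)\times(k-1)$ matrix over $\mathbb F_q$ whose $(r,s)$ entry is $\alpha_{i_s}^{\,r}-\alpha_{j_s}^{\,r}$ ($1\le r,s\le k-1$) is invertible.
   Context: For $1\le t\le n$, $S_t(n)=\{(i_1,\dots,i_t)\in\{1,\dots,n\}^t:\ 1\le i_1<i_2<\dots<i_t\le n\}$. *)

(* Defs.v *)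
From mathcomp Require Import all_boot all_order all_algebra all_field.
Set Implicit Arguments. Unset Strict Implicit. Unset Printing Implicit Defensive.

Definition S_t (t n : nat) (s : seq nat) : bool :=
  [&& size s == t, sorted ltn s & all (fun x => (1 <= x <= n)%N) s].

(* Main.v *)
Require Import Defs.
From mathcomp Require Import all_boot all_order all_algebra all_field.
From mathcomp Require Import zify.
Import GRing.Theory.
Local Open Scope ring_scope.

Lemma key (F : fieldType) (m : nat) (b : nat -> F) :
  (forall a c, (a <= m)%N -> (c <= m)%N -> b a = b c -> a = c) ->
  (\matrix_(r < m, s < m) (b s.+1 ^+ r.+1 - b s ^+ r.+1)) \in unitmx.
Proof.
case: m b => [|m] b binj; first by rewrite unitmxE det_mx00 unitr1.
rewrite unitmxE unitfE; apply/negP => /det0P [v vn0 vM].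
pose E := fun i : nat => if i is i'.+1 then v 0 (inord i') else 0.
pose P := \poly_(i < m.+2) E i.
have hP x : P.[x] = \sum_(r < m.+1) v 0 r * x ^+ r.+1.
  rewrite horner_poly big_ord_recl /= mul0r add0r.
  by apply: eq_bigr => r _; rewrite /E /= inord_val.
have Peq s : (s < m.+1)%N -> P.[b s.+1] = P.[b s].
  move=> hs; have := congr1 (fun A : 'M[F]_(1, m.+1) => A 0 (Ordinal hs)) vM.
  rewrite !mxE /= => H; apply/eqP; rewrite -subr_eq0 !hP -sumrB; apply/eqP; rewrite -[RHS]H.
  by apply: eq_bigr => r _; rewrite mxE mulrBr.
have Peq' s : (s <= m.+1)%N -> P.[b s] = P.[b 0].
  elim: s => [//|s IH] hs; rewrite Peq //; apply: IH; exact: ltnW.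
pose Q := P - (P.[b 0])%:P.
have Q0 : Q = 0.
  apply/eqP; apply/negPn/negP => Qn0.
  have := max_poly_roots Qn0 (rs := map b (iota 0 m.+2)).
  rewrite size_map size_iota.
  have hs : (size Q <= m.+2)%N.
    apply: leq_trans (size_polyD _ _) _; rewrite size_polyN size_polyC.
    rewrite geq_max size_poly /=; by case: (_ != 0).
  have hall : all (root Q) (map b (iota 0 m.+2)).
    apply/allP => x /mapP [s]; rewrite mem_iota => /andP [_ hsm] ->.
    by rewrite /root /Q hornerD hornerN hornerC Peq' // subrr.
  have hu : uniq (map b (iota 0 m.+2)).
    rewrite map_inj_in_uniq ?iota_uniq // => a c; rewrite !mem_iota /= => ha hc.
    by apply: binj.
  move=> /(_ hall hu); rewrite ltnNge hs //.
apply/negP: vn0; rewrite negbK; apply/eqP/rowP => r.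
have := congr1 (fun p : {poly F} => p`_(r.+1)) Q0.
rewrite /Q coefB coefC coef_poly /= /E ltnS ltn_ord subr0 coef0 inord_val.
by rewrite mxE => ->.
Qed.

Theorem lemma3p8 (F : finFieldType) (k n : nat) (alpha : nat -> F) :
  (3 <= k)%N ->
  ((k * (k + 1)) %/ 2 - 2 <= n)%N ->
  (forall a b, (1 <= a <= n)%N -> (1 <= b <= n)%N -> alpha a = alpha b -> a = b) ->
  exists i j : seq nat,
    [/\ S_t (k - 1) n i, S_t (k - 1) n j,
        (forall l, (l < k - 1)%N ->
            (nth 0 j l < nth 0 i l <= (k * (k + 1)) %/ 2 - 2)%N) &
        (\matrix_(r < k - 1, s < k - 1)
            (alpha (nth 0%N i s) ^+ r.+1 - alpha (nth 0%N j s) ^+ r.+1)) \in unitmx].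
Proof.
move=> hk hn ainj.
have hN : (k + 2 <= (k * (k + 1)) %/ 2)%N.
  rewrite leq_divRL //; nia.
exists (iota 2 (k - 1)), (iota 1 (k - 1)); split.
- rewrite /S_t size_iota eqxx iota_ltn_sorted /=.
  apply/allP => x; rewrite mem_iota => /andP [h1 h2]; apply/andP; split; lia.
- rewrite /S_t size_iota eqxx iota_ltn_sorted /=.
  apply/allP => x; rewrite mem_iota => /andP [h1 h2]; apply/andP; split; lia.
- move=> l hl; rewrite !nth_iota //; apply/andP; split; lia.
have -> : \matrix_(r < k - 1, s < k - 1)
      (alpha (nth 0%N (iota 2 (k - 1)) s) ^+ r.+1 - alpha (nth 0%N (iota 1 (k - 1)) s) ^+ r.+1)
    = \matrix_(r < k - 1, s < k - 1)
      ((fun x => alpha x.+1) s.+1 ^+ r.+1 - (fun x => alpha x.+1) s ^+ r.+1).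
  by apply/matrixP => r s; rewrite !mxE !nth_iota.
apply: (@key F (k - 1) (fun x => alpha x.+1)) => a c ha hc E.
have H1 : (1 <= a.+1 <= n)%N by apply/andP; split; lia.
have H2 : (1 <= c.+1 <= n)%N by apply/andP; split; lia.
by have [] := ainj _ _ H1 H2 E.
Qed.
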